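(* Let $D$ be a finite-dimensional division algebra over $\mathbb Q$ and $n\in\mathbb Z_{>0}$. Let $\Sigma$ be a non-trivial finitely generated abelian subgroup of ${\rm GL}_n(D)$ consisting of unipotent matrices, so that each $\alpha\in\Sigma$ is $\alpha=1+\eta_\alpha$ with $\eta_\alpha\in M_n(D)$ nilpotent. Let $\mathfrak k=\bigcap_{\alpha\in\Sigma}\ker\eta_\alpha\subseteq D^n$ and $k=\dim_D\mathfrak k$ (as a right $D$-vector space). Then ${\rm rk}_{\mathbb Z}\Sigma<n\cdot(n-k)\cdot[D:\mathbb Q]$.
   Context: $D^n$ is regarded as an $M_n(D)$–$D$-bimodule; dimensions over $D$ are of right $D$-vector spaces. ${\rm rk}_{\mathbb Z}$ is the torsion-free rank of an abelian group. *)

(* Defs.v *)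
From HB Require Import structures.
From mathcomp Require Import all_boot all_order all_algebra all_field.
Set Implicit Arguments. Unset Strict Implicit. Unset Printing Implicit Defensive.
Import GRing.Theory.
Local Open Scope ring_scope.

Definition is_division_algebra (D : falgType rat) : Prop :=
  forall x : D, x != 0 -> x \is a GRing.unit.

Definition dimQ (D : falgType rat) : nat := \dim (fullv : {vspace D}).

Section Defs.
Variables (D : falgType rat) (n : nat).
Local Notation M := 'M[D]_n.

Definition nilpotent_mx (eta : M) : Prop := exists m : nat, eta ^+ m = 0.

Definition unipotent (alpha : M) : Prop := nilpotent_mx (alpha - 1).

Definition invertible_mx (alpha : M) : Prop :=
  exists beta : M, alpha * beta = 1 /\ beta * alpha = 1.

Definition is_subgroup_GL (S : M -> Prop) : Prop :=
  [/\ S 1,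
      forall a b, S a -> S b -> S (a * b)
    & forall a, S a -> exists2 b, S b & a * b = 1 /\ b * a = 1].

Definition is_abelian (S : M -> Prop) : Prop :=
  forall a b, S a -> S b -> a * b = b * a.

(* In an abelian group: S is generated by the finite family g, i.e. every
   element is prod g_i^(a_i) * (prod g_i^(b_i))^-1 for naturals a_i, b_i. *)
Definition fin_generated (S : M -> Prop) : Prop :=
  exists r : nat, exists g : 'I_r -> M, (forall i, S (g i)) /\
    forall x, S x -> exists a b : 'I_r -> nat,
      x * \prod_(i < r) (g i) ^+ b i = \prod_(i < r) (g i) ^+ a i.

(* Z-linear (multiplicative) independence of a family in an abelian group:
   prod g_i^(e_i) = 1 with e_i in Z forces e = 0; written with e = a - b. *)
Definition Z_independent (r : nat) (g : 'I_r -> M) : Prop :=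
  forall a b : 'I_r -> nat,
    \prod_(i < r) (g i) ^+ a i = \prod_(i < r) (g i) ^+ b i ->
    forall i, a i = b i.

(* rk_Z S = r : the torsion-free rank, i.e. the maximal size of a
   Z-independent family of elements of S. *)
Definition rkZ_eq (S : M -> Prop) (r : nat) : Prop :=
  (exists g : 'I_r -> M, (forall i, S (g i)) /\ Z_independent g) /\
  (forall (s : nat) (g : 'I_s -> M), (forall i, S (g i)) -> Z_independent g ->
     (s <= r)%N).

(* kfrak = intersection over alpha in S of ker (alpha - 1) in D^n
   (column vectors, M_n(D) acting on the left, D on the right). *)
Definition in_kfrak (S : M -> Prop) (v : 'cV[D]_n) : Prop :=
  forall alpha, S alpha -> (alpha - 1) *m v = 0.

(* dim_D kfrak = k : the columns of B : 'M_(n,k) form a basis of kfrak as a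
   right D-vector space (right D-linearly independent and spanning). *)
Definition rdimD_eq (S : M -> Prop) (k : nat) : Prop :=
  exists B : 'M[D]_(n, k),
    [/\ forall j : 'I_k, in_kfrak S (col j B),
        forall c : 'cV[D]_k, B *m c = 0 -> c = 0
      & forall v, in_kfrak S v -> exists c : 'cV[D]_k, v = B *m c].

End Defs.

(* Main.v *)
Require Import Defs.
From HB Require Import structures.
From mathcomp Require Import all_boot all_order all_algebra all_field.
From mathcomp Require Import ring zify.
Set Implicit Arguments. Unset Strict Implicit. Unset Printing Implicit Defensive.
Import GRing.Theory Num.Theory.
Local Open Scope ring_scope.

Section Exp.
Variables (R : pzRingType) (f : {rmorphism rat -> R}).
Hypothesis fC : forall c x, GRing.comm (f c) x.

Definition ifact (j : nat) : rat := (j`!%:R)^-1.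
Definition Ex N x := \sum_(0 <= j < N) f (ifact j) * x ^+ j.

Lemma Ex_trunc N p x : x ^+ p = 0 -> (p <= N)%N ->
  Ex N x = \sum_(0 <= j < p) f (ifact j) * x ^+ j.
Proof.
move=> xp pN; rewrite /Ex (big_cat_nat (leq0n p) pN) /= [X in _ + X]big1_seq ?addr0 //.
move=> j /andP[_]; rewrite mem_index_iota => /andP[pj _].
by rewrite -(subnKC pj) exprD xp mul0r mulr0.
Qed.

Lemma sq_sum N p (G : nat -> nat -> R) :
  (forall a b, (p <= a)%N || (p <= b)%N -> G a b = 0) -> (p + p <= N)%N ->
  \sum_(0 <= l < N) \sum_(i < l.+1) G (l - i)%N i =
  \sum_(0 <= a < p) \sum_(0 <= b < p) G a b.
Proof.
move=> G0 pN.
transitivity (\sum_(0 <= l < N) \sum_(0 <= b < N) (if (b <= l)%N then G (l - b)%N b else 0)).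
  apply: eq_big_nat => l /andP[_ lN]; rewrite -(big_mkord xpredT (fun i => G (l - i)%N i)).
  by rewrite (big_nat_widen _ _ _ _ _ lN) big_mkcond.
rewrite exchange_big_nat /= [RHS]exchange_big_nat /=.
have pN' : (p <= N)%N by lia.
rewrite (big_cat_nat (leq0n p) pN') /= [X in _ + X]big1_seq ?addr0; last first.
  move=> b /andP[_]; rewrite mem_index_iota => /andP[pb _].
  by apply: big1 => l _; case: ifP => // _; apply: G0; rewrite pb orbT.
apply: eq_big_nat => b /andP[_ bp].
have bN : (b <= N)%N by lia.
rewrite (big_cat_nat (leq0n b) bN) /= big1_seq ?add0r; last first.
  move=> l /andP[_]; rewrite mem_index_iota => /andP[_ lb].
  by rewrite leqNgt lb.
rewrite -{1}[b]add0n big_addn.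
under eq_bigr => i _ do rewrite leq_addl addnK /=.
have pNb : (p <= N - b)%N by lia.
rewrite (big_cat_nat (leq0n p) pNb) /= [X in _ + X]big1_seq ?addr0 //.
move=> i /andP[_]; rewrite mem_index_iota => /andP[pi _].
by apply: G0; rewrite pi.
Qed.

Lemma ifact_bin l i : (i <= l)%N ->
  ifact l *+ 'C(l, i) = ifact (l - i) * ifact i.
Proof.
move=> il; have := bin_fact il.
move/(congr1 (fun k => k%:R : rat)); rewrite !natrM => h.
rewrite /ifact -mulr_natr -h.
have h1 : ((l - i)`!%:R : rat) != 0 by rewrite pnatr_eq0 -lt0n fact_gt0.
have h2 : (i`!%:R : rat) != 0 by rewrite pnatr_eq0 -lt0n fact_gt0.
have h3 : ('C(l, i)%:R : rat) != 0 by rewrite pnatr_eq0 -lt0n bin_gt0.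
by field; rewrite h1 h2 h3.
Qed.

Lemma Ex_add N p x y : GRing.comm x y -> x ^+ p = 0 -> y ^+ p = 0 ->
  (p + p <= N)%N -> Ex N (x + y) = Ex N x * Ex N y.
Proof.
move=> cxy xp yp pN.
have pN' : (p <= N)%N by lia.
rewrite (Ex_trunc xp pN') (Ex_trunc yp pN') big_distrlr /=.
rewrite -(@sq_sum N p (fun a b => f (ifact a) * x ^+ a * (f (ifact b) * y ^+ b))) //; last first.
  by move=> a b /orP[] h; rewrite -(subnKC h) exprD ?xp ?yp !(mul0r, mulr0).
rewrite /Ex; apply: eq_bigr => l _; rewrite exprDn_comm // mulr_sumr.
apply: eq_bigr => [[i]] /=; rewrite ltnS => il _.
rewrite mulrnAr -mulrnAl -rmorphMn ifact_bin // rmorphM.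
by rewrite -!mulrA; congr (_ * _); rewrite !mulrA fC.
Qed.

Lemma Ex0 N : (0 < N)%N -> Ex N 0 = 1.
Proof.
move=> N0; rewrite (@Ex_trunc N 1) ?expr1 //= big_nat1 expr0 mulr1.
by rewrite /ifact fact0 invr1 rmorph1.
Qed.

Lemma Ex_form N y : (2 <= N)%N ->
  Ex N y = 1 + y + y ^+ 2 * \sum_(0 <= i < N - 2) f (ifact i.+2) * y ^+ i.
Proof.
case: N => [|[|N]] // _; rewrite /Ex big_ltn // big_ltn // /=.
rewrite /ifact fact0 factS fact0 muln1 invr1 rmorph1 mul1r mul1r expr0 expr1 addrA.
congr (_ + _); rewrite mulr_sumr subn2 /= -[2%N]add0n big_addn /= subn2 /=.
apply: eq_bigr => i _; rewrite add0n addn2 mulrA -(fC _ (y ^+ 2)) -mulrA -exprD addnC.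
by rewrite addn2.
Qed.

End Exp.

Lemma Ex_morph (R R' : pzRingType) (f : {rmorphism rat -> R}) (f' : {rmorphism rat -> R'})
  (g : {rmorphism R -> R'}) : (forall c, g (f c) = f' c) ->
  forall N x, g (Ex f N x) = Ex f' N (g x).
Proof.
move=> gf N x; rewrite /Ex rmorph_sum; apply: eq_bigr => j _.
by rewrite rmorphM rmorphXn gf.
Qed.


Section Mx.
Variables (D : falgType rat) (n : nat).
Definition sc : {rmorphism rat -> 'M[D]_n.+1} := (@scalar_mx D n.+1) \o (in_alg D).
Lemma scC c (X : 'M[D]_n.+1) : GRing.comm (sc c) X.
Proof.
rewrite /GRing.comm /sc /= -!mulmxE mul_scalar_mx; apply/matrixP=> i j.
rewrite !mxE (bigD1 j) //= big1 ?addr0; last by move=> k /negbTE kj; rewrite !mxE kj mulr0n mulr0.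
by rewrite !mxE eqxx mulr1n -scalerAl mul1r -scalerAr mulr1.
Qed.

Variable eta : 'M[D]_n.+1.
Definition cfu : commr_rmorph sc eta := fun c => esym (scC c eta).
Local Notation hm := (horner_morph cfu).
Lemma hmC c : hm c%:P = sc c. Proof. exact: horner_morphC. Qed.
Lemma hmX : hm 'X = eta. Proof. exact: horner_morphX. Qed.
Lemma hm_comm p q : GRing.comm (hm p) (hm q).
Proof. by rewrite /GRing.comm -!rmorphM mulrC. Qed.
Lemma hm_commY Y p : GRing.comm Y eta -> GRing.comm Y (hm p).
Proof.
move=> cY; rewrite /horner_morph horner_coef; apply: commr_sum => i _.
apply: commrM; last exact: commrX.
by rewrite coef_map /GRing.comm (scC _ Y).
Qed.
Lemma hm_nil m a : eta ^+ m = 0 -> hm ('X * a) ^+ m = 0.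
Proof.
move=> em; rewrite -rmorphXn exprMn_comm; last exact: mulrC.
by rewrite rmorphM rmorphXn /= hmX em mul0r.
Qed.

Lemma polyC_comm c (x : {poly rat}) : GRing.comm (polyC c) x.
Proof. exact: mulrC. Qed.

Lemma Ex_hm N p : Ex sc N (hm p) = hm (Ex polyC N p).
Proof. by rewrite (Ex_morph (g := hm) (f := polyC) (f' := sc)) // => c; rewrite /= hmC. Qed.

Lemma Ex_surj N m : eta ^+ m = 0 -> (0 < m)%N -> (m + m <= N)%N ->
  exists p0, Ex sc N (hm ('X * p0)) = 1 + eta.
Proof.
move=> em m0 mN.
have key : forall j, exists p0 q, Ex sc N (hm ('X * p0)) = hm (1 + 'X + 'X ^+ j.+1 * q).
  elim => [|j [p0 [q IH]]].
    exists 0, (-1); rewrite mulr0 rmorph0 Ex0 ?expr1 ?mulrN1 ?addrK ?rmorph1 //.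
    lia.
  set Rp := \sum_(0 <= i < N - 2) polyC (ifact i.+2) * ('X * (- 'X ^+ j * q)) ^+ i.
  exists (p0 - 'X ^+ j * q), (- q - 'X ^+ j * q^+2 + 'X ^+ j * q^+2 * Rp * (1 + 'X + 'X ^+ j.+1 * q)).
  have -> : 'X * (p0 - 'X ^+ j * q) = 'X * p0 + 'X * (- 'X ^+ j * q) by ring.
  rewrite rmorphD (Ex_add (@scC) (p := m)) ?IH ?hm_nil //; last exact: hm_comm.
  rewrite Ex_hm -rmorphM; congr hm.
  rewrite (Ex_form (@polyC_comm)); last lia.
  rewrite -/Rp !exprS; ring.
have [p0 [q h]] := key m.-1; exists p0; rewrite h prednK // !rmorphD rmorphM rmorphXn /= hmX em mul0r addr0 rmorph1.
by [].
Qed.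
End Mx.


Lemma left_inv (D : falgType rat) (hD : is_division_algebra D) k n (B : 'M[D]_(n, k)) :
  (forall c : 'cV_k, B *m c = 0 -> c = 0) -> exists C : 'M_(k, n), C *m B = 1%:M.
Proof.
elim: k B => [|k IH] B Bf.
  by exists 0; rewrite [LHS]flatmx0 [RHS]flatmx0.
pose B1 : 'M_(n, 1 + k) := B.
pose b := lsubmx B1; pose B' := rsubmx B1.
have eB : B1 = row_mx b B' by rewrite hsubmxK.
have b0 : b != 0.
  apply/eqP => b0.
  have : B1 *m col_mx 1%:M 0 = 0 by rewrite eB mul_row_col b0 mul0mx mulmx0 addr0.
  move/Bf => /(congr1 (fun c : 'cV_(1 + k) => usubmx c)); rewrite col_mxKu linear0 => /matrixP/(_ 0 0).
  by rewrite !mxE /= mulr1n => /eqP; rewrite oner_eq0.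
have [i [j bij]] := matrix0Pn _ b0.
rewrite (ord1 j) in bij.
pose rho : 'rV_n := \row_l (if l == i then (b i 0)^-1 else 0).
have rb : rho *m b = 1%:M.
  apply/matrixP => x y; rewrite (ord1 x) (ord1 y) !mxE (bigD1 i) //= big1 ?addr0.
    by move: bij; rewrite /rho !mxE eqxx => bij; rewrite mulVr ?hD.
  by move=> l /negbTE li; rewrite /rho !mxE li mul0r.
pose P := 1%:M - b *m rho.
have Pb : P *m b = 0 by rewrite mulmxBl mul1mx -mulmxA rb mulmx1 subrr.
have [C2 C2B] : exists C2 : 'M_(k, n), C2 *m (P *m B') = 1%:M.
  apply: IH => c Bc; have : B1 *m col_mx (- (rho *m B' *m c)) c = 0.
    rewrite eB mul_row_col; move: Bc; rewrite /P mulmxBl mul1mx mulmxBl => /eqP.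
    by rewrite subr_eq0 => /eqP ->; rewrite mulmxN !mulmxA addNr.
  by move/Bf => h; have := congr1 (fun v : 'cV_(1 + k) => dsubmx v) h; rewrite col_mxKd linear0.
pose C' := C2 *m P.
have C'b : C' *m b = 0 by rewrite /C' -mulmxA Pb mulmx0.
have C'B' : C' *m B' = 1%:M by rewrite /C' -mulmxA.
pose rho' := rho *m (1%:M - B' *m C').
exists (col_mx rho' C' : 'M_(1 + k, n)).
rewrite -[B]/B1 eB (_ : _ *m _ = @mulmx D (1 + k) n (1 + k) (col_mx rho' C') (row_mx b B')) //.
rewrite mul_mx_row !mul_col_mx C'b C'B'.
have -> : rho' *m b = 1%:M by rewrite /rho' -mulmxA mulmxBl mul1mx -mulmxA C'b mulmx0 subr0.
have -> : rho' *m B' = 0 by rewrite /rho' -mulmxA mulmxBl mul1mx -mulmxA C'B' mulmx1 subrr mulmx0.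
by rewrite (scalar_mx_block 1 k) block_mxEh.
Qed.


Section Nil.
Variable R : pzRingType.
Implicit Types x y : R.

Lemma nil_mono x a b : x ^+ a = 0 -> (a <= b)%N -> x ^+ b = 0.
Proof. by move=> xa ab; rewrite -(subnKC ab) exprD xa mul0r. Qed.

Lemma nil_add x y a b : GRing.comm x y -> x ^+ a = 0 -> y ^+ b = 0 -> (x + y) ^+ (a + b) = 0.
Proof.
move=> cxy xa yb; rewrite exprDn_comm // big1 // => [[i]] /= _ _.
case: (ltnP i b) => ib.
  by rewrite (@nil_mono x a) ?mul0r ?mul0rn //; lia.
by rewrite (nil_mono yb ib) mulr0 mul0rn.
Qed.

Lemma nil_sum (I : Type) (s : seq I) (x : I -> R) m :
  (forall i j, GRing.comm (x i) (x j)) -> (forall i, x i ^+ m = 0) ->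
  (\sum_(i <- s) x i) ^+ (size s * m + 1) = 0.
Proof.
move=> cx xm; elim: s => [|i s IH]; first by rewrite big_nil expr1.
rewrite big_cons /= mulSn -addnA nil_add //.
by apply: commr_sum => j _; apply: cx.
Qed.
End Nil.

Lemma Ex_mul (R : pzRingType) (f : {rmorphism rat -> R}) (fC : forall c x, GRing.comm (f c) x)
  N P m z a : z ^+ m = 0 -> (m <= P)%N -> (P + P <= N)%N -> (0 < N)%N ->
  Ex f N (z *+ a) = Ex f N z ^+ a.
Proof.
move=> zm mP PN N0; elim: a => [|a IH]; first by rewrite mulr0n Ex0 ?expr0.
rewrite mulrS (Ex_add fC (p := P)) ?IH ?exprS //.
- exact/commrMn.
- exact: nil_mono zm mP.
- by rewrite exprMn_n (nil_mono zm mP) mul0rn.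
Qed.

Lemma Ex_sum (R : pzRingType) (f : {rmorphism rat -> R}) (fC : forall c x, GRing.comm (f c) x)
  (I : Type) N P m (z g : I -> R) (a : I -> nat) (s : seq I) :
  (forall i j, GRing.comm (z i) (z j)) -> (forall i, z i ^+ m = 0) ->
  (forall i, Ex f N (z i) = g i) ->
  (m <= P)%N -> (size s * m + 1 <= P)%N -> (P + P <= N)%N -> (0 < N)%N ->
  Ex f N (\sum_(i <- s) z i *+ a i) = \prod_(i <- s) g i ^+ a i.
Proof.
move=> cz zm zg mP sP PN N0; elim: s sP => [|i s IH] sP.
  by rewrite big_nil big_nil Ex0.
rewrite big_cons big_cons (Ex_add fC (p := P)) //.
- by rewrite (Ex_mul fC (P := P) (m := m)) // zg IH //; move: sP => /=; lia.
- by apply: commr_sum => j _; apply/commrMn; rewrite /GRing.comm; apply/esym/commrMn.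
- by rewrite exprMn_n (nil_mono (zm i) mP) mul0rn.
- apply: (@nil_mono _ _ (size s * m + 1)); last by move: sP => /=; lia.
  apply: nil_sum => [j k|j]; first by apply/commrMn; rewrite /GRing.comm; apply/esym/commrMn.
  by rewrite exprMn_n zm mul0rn.
Qed.
Section MF.
Variable D : falgType rat.
Definition mf a b (X : 'M[D]_(a, b)) : {ffun 'I_a * 'I_b -> D} := [ffun ij => X ij.1 ij.2].
Lemma mf_inj a b : injective (@mf a b).
Proof. by move=> X Y /ffunP h; apply/matrixP => i j; have := h (i, j); rewrite !ffunE. Qed.
Lemma mf0 a b : mf (0 : 'M[D]_(a, b)) = 0.
Proof. by apply/ffunP => ij; rewrite !ffunE mxE. Qed.
Lemma dim_ff a b : \dim (fullv : {vspace {ffun 'I_a * 'I_b -> D}}) = (a * b * dimQ D)%N.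
Proof. by rewrite dimvf /dimQ dimvf /dim /= card_prod !card_ord. Qed.
Definition fm a b (f : {ffun 'I_a * 'I_b -> D}) : 'M[D]_(a, b) := \matrix_(i, j) f (i, j).
Lemma fmK a b (X : 'M[D]_(a, b)) : fm (mf X) = X.
Proof. by apply/matrixP => i j; rewrite !mxE ffunE. Qed.
Lemma mfK a b (f : {ffun 'I_a * 'I_b -> D}) : mf (fm f) = f.
Proof. by apply/ffunP => [[i j]]; rewrite !ffunE mxE. Qed.
End MF.

Lemma sc_entry (D : falgType rat) n c (X : 'M[D]_n.+1) i j : (sc D n c * X) i j = c *: X i j.
Proof. by rewrite /sc /= -mulmxE mul_scalar_mx mxE -scalerAl mul1r. Qed.

Lemma mf_comb (D : falgType rat) n (I : finType) (k : I -> rat) (X : I -> 'M[D]_n.+1) :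
  \sum_i k i *: mf (X i) = mf (\sum_i sc D n (k i) * X i).
Proof.
apply/ffunP => ij; rewrite sum_ffunE !ffunE summxE; apply: eq_bigr => i _.
by rewrite ffunE sc_entry ffunE.
Qed.

Lemma colmx0 (D : falgType rat) a b c (X : 'M[D]_(a, b)) (B : 'M[D]_(b, c)) :
  (forall j, X *m col j B = 0) -> X *m B = 0.
Proof.
move=> h; apply/matrixP => i j; have /colP/(_ i) := h j.
rewrite !mxE => h'; apply: etrans h'; apply: eq_bigr => l _; by rewrite mxE.
Qed.

Unset Implicit Arguments.
Set Strict Implicit.
Set Printing Implicit Defensive.

Theorem lemma5p26 (D : falgType rat) (hD : is_division_algebra D)
  (n : nat) (hn : (0 < n)%N) (S : 'M[D]_n -> Prop)
  (hS : is_subgroup_GL S) (hab : is_abelian S) (hfg : fin_generated S)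
  (hnt : exists2 a, S a & a <> 1) (hunip : forall a, S a -> unipotent a)
  (k r : nat) (hk : rdimD_eq S k) (hr : rkZ_eq S r) :
  (r < n * (n - k) * dimQ D)%N.
Proof.
destruct n as [|n]; first by [].
have [[g [gS gind]] _] := hr.
have [B [Bk Binj _]] := hk.
have [C CB] := left_inv hD Binj.
pose eta i := g i - 1.
have etaB i : eta i *m B = 0 by apply: colmx0 => j; apply: Bk; apply: gS.
have cEta i j : GRing.comm (eta i) (eta j).
  apply: commrB; last exact: commr1; rewrite /GRing.comm; apply/esym; apply: commrB; last exact: commr1.
  exact: hab.
have ex_m i : exists m, eta i ^+ m == 0.
  by have [m hm] := hunip _ (gS i); exists m; apply/eqP.
pose m i := xchoose (ex_m i).
have em i : eta i ^+ m i = 0 by apply/eqP; exact: (xchooseP (ex_m i)).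
pose M := (\max_i m i).+1.
have eM i : eta i ^+ M = 0 by apply: (nil_mono (em i)); apply: leqW; apply: leq_bigmax.
pose P := (r.+1 * M + 1)%N; pose N := (P + P)%N.
have MP : (M <= P)%N by rewrite /P mulSn; lia.
have MN : (M + M <= N)%N by rewrite /N; lia.
have ex_p i : exists p0 : {poly rat}, Ex (sc D n) N (horner_morph (cfu (eta i)) ('X * p0)) == g i.
  have [p0 h] := @Ex_surj D n (eta i) N M (eM i) (ltn0Sn _) MN.
  by exists p0; rewrite h /eta addrC subrK.
pose z i := horner_morph (cfu (eta i)) ('X * xchoose (ex_p i)).
have zg i : Ex (sc D n) N (z i) = g i by apply/eqP; exact: (xchooseP (ex_p i)).
have zM i : z i ^+ M = 0 by apply: hm_nil.
have zB i : z i *m B = 0.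
  by rewrite /z mulrC rmorphM /= hmX -mulmxE -mulmxA etaB mulmx0.
have cz i j : GRing.comm (z i) (z j).
  apply: hm_commY; rewrite /GRing.comm; apply/esym; apply: hm_commY; exact: cEta.
have sizeE : size (index_enum 'I_r) = r by rewrite /index_enum unlock -enumT -cardT card_ord.
have zind (c : 'I_r -> rat) : \sum_j sc D n (c j) * z j = 0 -> forall j, c j = 0.
  move=> hc.
  pose L := \prod_j denq (c j).
  pose e j := (numq (c j) * \prod_(i | i != j) denq (c i))%R.
  have eL j : (e j)%:~R = c j * L%:~R :> rat.
    by rewrite /L (bigD1 j) //= (intrM _ (denq _)) mulrA -numqE /e intrM.
  have L0 : (L%:~R : rat) != 0.
    by rewrite intr_eq0; apply/prodf_neq0 => i _; rewrite denq_neq0.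
  pose a j := if (0 <= e j) then `|e j|%N else 0%N.
  pose b j := if (0 <= e j) then 0%N else `|e j|%N.
  have eab j : e j = (a j)%:Z - (b j)%:Z by rewrite /a /b; case: ifP => h; lia.
  have hab2 : \sum_j z j *+ a j = \sum_j z j *+ b j.
    apply/eqP; rewrite -subr_eq0 -sumrB; apply/eqP.
    have := congr1 (fun x => sc D n (L%:~R) * x) hc; rewrite mulr0 mulr_sumr => h; rewrite -[RHS]h.
    apply: eq_bigr => j _; rewrite mulrA -rmorphM mulrC -eL eab intrB rmorphB.
    by rewrite -!pmulrn !rmorph_nat mulrBl !mulr_natl.
  have := congr1 (Ex (sc D n) N) hab2.
  rewrite (Ex_sum (@scC D n) _ cz zM zg MP) ?sizeE ?(Ex_sum (@scC D n) _ cz zM zg MP) ?sizeE //;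
    try (rewrite /P /N; lia).
  move/gind => abj j; have ej : e j = 0 by rewrite eab abj subrr.
  have := eL j; rewrite ej rmorph0 => /esym/eqP; rewrite mulf_eq0 (negbTE L0) orbF.
  by move/eqP.
pose Y : 'M[D]_n.+1 := 1%:M - B *m C.
have YB : Y *m B = 0 by rewrite mulmxBl mul1mx -mulmxA CB mulmx1 subrr.
have YY : Y * Y = Y by rewrite -mulmxE {2}/Y mulmxBr mulmx1 mulmxA YB mul0mx subr0.
have YX p : Y ^+ p.+1 = Y by elim: p => [|p IH]; rewrite ?expr1 // exprS IH YY.
have Y0 : Y != 0.
  apply/eqP => /subr0_eq BC1; have [al Sal al1] := hnt.
  have alB : (al - 1) *m B = 0 by apply: colmx0 => j; apply: Bk.
  apply: al1; apply: subr0_eq; rewrite -[al - 1]mulmx1 BC1 mulmxA alB mul0mx.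
  by [].
have cscz c c' i j : GRing.comm (sc D n c * z i) (sc D n c' * z j).
  apply: commrM; first by rewrite /GRing.comm; apply/esym; apply: scC.
  rewrite /GRing.comm; apply/esym; apply: commrM; last exact: cz.
  by rewrite /GRing.comm; apply/esym; apply: scC.
pose w (i : 'I_r.+1) := if unlift ord0 i is Some j then z j else Y.
have wB i : w i *m B = 0 by rewrite /w; case: (unlift ord0 i) => [j|]; [apply: zB | apply: YB].
pose T := [tuple mf (w i) | i < r.+1].
have freeT : free T.
  apply/freeP => kk hkk.
  have : mf (\sum_i sc D n (kk i) * w i) = mf 0.
    rewrite mf0 -mf_comb -[RHS]hkk; apply: eq_bigr => i _.
    by rewrite -(tnth_nth 0) tnth_mktuple.
  move/mf_inj; rewrite big_ord_recl /w unlift_none.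
  under eq_bigr do rewrite liftK.
  move=> h0.
  have k0 : kk ord0 = 0.
    apply/eqP/negP => /negP k0.
    have : (sc D n (- kk ord0) * Y) ^+ P = 0.
      have -> : sc D n (- kk ord0) * Y = \sum_(j < r) sc D n (kk (lift ord0 j)) * z j.
        by rewrite rmorphN mulNr; apply/eqP; rewrite eq_sym -subr_eq0 opprK addrC h0.
      apply: (@nil_mono _ _ (size (index_enum 'I_r) * M + 1)); last by rewrite sizeE /P mulSn; lia.
      apply: nil_sum => [i j|i]; first exact: cscz.
      by rewrite exprMn_comm ?zM ?mulr0 //; apply: scC.
    rewrite exprMn_comm; last exact: scC.
    rewrite (_ : P = P.-1.+1) ?YX; last by rewrite /P addn1.
    rewrite -rmorphXn => /(congr1 (fun x => sc D n ((- kk ord0) ^+ P)^-1 * x)).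
    rewrite mulr0 mulrA -rmorphM mulVf ?rmorph1 ?mul1r; first by move/eqP; rewrite (negbTE Y0).
    by rewrite expf_neq0 // oppr_eq0.
  move: h0; rewrite k0 rmorph0 mul0r add0r => /zind h1 i.
  by case: (unliftP ord0 i) => [j ->|->] //; apply: h1.
pose Psi (f : {ffun 'I_n.+1 * 'I_n.+1 -> D}) : {ffun 'I_n.+1 * 'I_k -> D} := mf (fm f *m B).
have Psi_lin : linear Psi.
  move=> a u v; apply/ffunP => [[i j]]; rewrite !ffunE !mxE scaler_sumr -big_split.
  by apply: eq_bigr => l _; rewrite !mxE !ffunE mulrDl scalerAl.
pose PsiL : {linear _ -> _} := HB.pack Psi (GRing.isLinear.Build _ _ _ _ Psi Psi_lin).
pose h := linfun PsiL.
have hE f : h f = Psi f by rewrite lfunE.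
have himg : (h @: fullv = fullv)%VS.
  apply/eqP; rewrite eqEsubv subvf /=; apply/subvP => f' _; apply/memv_imgP.
  exists (mf (fm f' *m C)); first exact: memvf.
  by rewrite hE /Psi fmK -mulmxA CB mulmx1 mfK.
have hker : (<<T>> <= fullv :&: lker h)%VS.
  rewrite subv_cap subvf /=; apply/span_subvP => v /tnthP [i ->].
  by rewrite memv_ker hE tnth_map /Psi fmK wB mf0.
have := limg_ker_dim h fullv; rewrite himg !dim_ff.
have := dimvS hker; rewrite (eqP freeT) size_tuple.
rewrite mulnBr mulnBl; nia.
Qed.
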